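(* Let $\upsilon$ be a positive integer, let $n,m$ be nonnegative integers, $N=\max\{n,m\}$, and let $p,q$ be real numbers with $p>(\upsilon+1)N+1$ and $q>-1$. Then $$\int_0^\infty \frac{x^{q}}{(1+x)^{p+q}}\,M_n(p,q,\upsilon;x)\,\mathfrak{M}_m(p,q,\upsilon;x)\,dx=\frac{n!\,\Gamma(p-n)\,\Gamma(q+1+\upsilon n)}{(p-1-n-\upsilon n)\,\Gamma(p+q-n)}\,\delta_{n,m},$$ where $\delta_{n,m}$ is the Kronecker delta.
   Context: $(a)_k=a(a+1)\cdots(a+k-1)$, $(a)_0=1$, denotes the Pochhammer symbol. For a positive integer $\upsilon$, a nonnegative integer $n$ and real parameters $p,q$ define $$M_n(p,q,\upsilon;x)=(-1)^n(q+1)_{\upsilon n}\sum_{j=0}^{n}(-1)^j\binom{n}{j}\frac{(n+1-p)_{\upsilon j}}{(q+1)_{\upsilon j}}(-x)^{\upsilon j},$$ $$\mathfrak{M}_n(p,q,\upsilon;x)=\sum_{r=0}^{n}\sum_{s=0}^{r}(-1)^{s+n}\binom{r}{s}\frac{(p+q-n)_r}{r!}\left(\frac{s+q+1}{\upsilon}\right)_n x^r(1+x)^{n-r}.$$ *)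

(* Defs.v *)
From Stdlib Require Import Reals Factorial.
From Coquelicot Require Import Coquelicot.
Open Scope R_scope.

Fixpoint poch (a : R) (k : nat) : R :=
  match k with
  | O => 1
  | S k' => poch a k' * (a + INR k')
  end.

Definition binomR (n j : nat) : R := Stdlib.Reals.Binomial.C n j.

Definition Gamma (s : R) : R :=
  RInt_gen (fun t => Rpower t (s - 1) * exp (- t))
           (at_right 0) (Rbar_locally p_infty).

Definition Mpoly (n : nat) (p q : R) (u : nat) (x : R) : R :=
  (-1) ^ n * poch (q + 1) (u * n)
  * sum_f_R0 (fun j => (-1) ^ j * binomR n j
        * poch (INR n + 1 - p) (u * j) / poch (q + 1) (u * j)
        * (- x) ^ (u * j)) n.

Definition frakM (n : nat) (p q : R) (u : nat) (x : R) : R :=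
  sum_f_R0 (fun r =>
    sum_f_R0 (fun s =>
      (-1) ^ (s + n) * binomR r s * (poch (p + q - INR n) r / INR (fact r))
      * poch ((INR s + q + 1) / INR u) n * x ^ r * (1 + x) ^ (n - r)) r) n.

Definition kron_delta (n m : nat) : R := if Nat.eqb n m then 1 else 0.

(* Main.v *)
Require Import Defs.
From Stdlib Require Import Reals Factorial Lra Lia Psatz.
From Coquelicot Require Import Coquelicot.
Open Scope R_scope.

Lemma sum_S_r (f : nat -> R) N : sum_f_R0 f (S N) = sum_f_R0 f N + f (S N).
Proof. reflexivity. Qed.

Lemma sum_S_l (f : nat -> R) N :
  sum_f_R0 f (S N) = f 0%nat + sum_f_R0 (fun i => f (S i)) N.
Proof. rewrite decomp_sum; [reflexivity| lia]. Qed.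

Lemma sum_ext (f g : nat -> R) N : (forall i, (i <= N)%nat -> f i = g i) ->
  sum_f_R0 f N = sum_f_R0 g N.
Proof. apply sum_eq. Qed.

Lemma sum_scal_l (f : nat -> R) N c : c * sum_f_R0 f N = sum_f_R0 (fun i => c * f i) N.
Proof. induction N; simpl; [ring| rewrite <- IHN; ring]. Qed.

Lemma sum_zero (f : nat -> R) N : (forall i, (i <= N)%nat -> f i = 0) -> sum_f_R0 f N = 0.
Proof. intros H. induction N; simpl. apply H; lia. rewrite IHN, H; intros; try lia; try ring. apply H; lia. Qed.

Lemma sum_opp (f : nat -> R) N : sum_f_R0 (fun i => - f i) N = - sum_f_R0 f N.
Proof. induction N; simpl; [ring| rewrite IHN; ring]. Qed.

Lemma sum_minus' (f g : nat -> R) N : sum_f_R0 (fun i => f i - g i) N = sum_f_R0 f N - sum_f_R0 g N.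
Proof. induction N; simpl; [ring| rewrite IHN; ring]. Qed.

Lemma tri_swap (F : nat -> nat -> R) m :
  sum_f_R0 (fun r => sum_f_R0 (fun s => F r s) r) m =
  sum_f_R0 (fun s => sum_f_R0 (fun t => F (s + t)%nat s) (m - s)) m.
Proof.
  induction m.
  - simpl. replace (0+0)%nat with 0%nat by lia. reflexivity.
  - rewrite (sum_S_r _ m), IHm.
    rewrite (sum_S_r (fun s => F (S m) s) m).
    rewrite (sum_S_r (fun s => sum_f_R0 (fun t => F (s + t)%nat s) (S m - s)) m).
    replace (S m - S m)%nat with 0%nat by lia. simpl (sum_f_R0 _ 0).
    replace (S m + 0)%nat with (S m) by lia.
    rewrite <- Rplus_assoc. f_equal.
    rewrite <- sum_plus. apply sum_ext. intros i Hi.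
    replace (S m - i)%nat with (S (m - i)) by lia. rewrite sum_S_r.
    replace (i + S (m - i))%nat with (S m) by lia. reflexivity.
    rewrite Nat.add_0_r. reflexivity.
Qed.

Lemma poch_add a k l : poch a (k + l) = poch a k * poch (a + INR k) l.
Proof.
  induction l.
  - rewrite Nat.add_0_r; simpl; ring.
  - rewrite Nat.add_succ_r. simpl. rewrite IHl, plus_INR. ring.
Qed.

Lemma poch_S_l a k : poch a (S k) = a * poch (a + 1) k.
Proof.
  replace (S k) with (1 + k)%nat by lia. rewrite poch_add. simpl. ring_simplify. reflexivity.
Qed.

Lemma poch_pos a k : 0 < a -> 0 < poch a k.
Proof.
  intros Ha; induction k; simpl. lra. apply Rmult_lt_0_compat; auto.
  pose proof (pos_INR k); lra.
Qed.

Lemma poch_neg a k : poch a k * (-1) ^ k = poch (- a - INR k + 1) k.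
Proof.
  induction k.
  - simpl; ring.
  - rewrite (poch_S_l (- a - INR (S k) + 1)). rewrite S_INR.
    replace (- a - (INR k + 1) + 1 + 1) with (- a - INR k + 1) by ring.
    rewrite <- IHk. simpl. ring.
Qed.

Lemma poch_zero_nat j m : (j < m)%nat -> poch (- INR j) m = 0.
Proof.
  induction m; intros H. lia.
  simpl. destruct (Nat.eq_dec j m) as [->|Hn].
  - ring.
  - rewrite IHm by lia. ring.
Qed.

Lemma poch_neg_nat n : poch (- INR n) n = (-1) ^ n * INR (fact n).
Proof.
  pose proof (poch_neg (INR 1) n) as H.
  assert (H1 : forall k, poch 1 k = INR (fact k)).
  { induction k. reflexivity. change (poch 1 (S k)) with (poch 1 k * (1 + INR k)). rewrite IHk, fact_simpl, mult_INR, S_INR. ring. }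
  simpl INR in H. rewrite H1 in H.
  replace (- (1) - INR n + 1) with (- INR n) in H by ring.
  rewrite <- H. ring.
Qed.

Lemma hockey a K :
  sum_f_R0 (fun t => poch a t / INR (fact t)) K = poch (a + 1) K / INR (fact K).
Proof.
  induction K.
  - simpl. field.
  - rewrite sum_S_r, IHK.
    rewrite poch_S_l. simpl (poch (a+1) (S K)).
    rewrite fact_simpl, mult_INR, S_INR.
    pose proof (INR_fact_neq_0 K). pose proof (pos_INR K).
    field. lra.
Qed.

Fixpoint bin (n k : nat) : R :=
  match n, k with
  | _, O => 1
  | O, S _ => 0
  | S n', S k' => bin n' k' + bin n' (S k')
  end.

Lemma bin_0 n : bin n 0 = 1.
Proof. destruct n; reflexivity. Qed.

Lemma bin_gt n k : (n < k)%nat -> bin n k = 0.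
Proof.
  revert k; induction n; intros k H; destruct k; simpl; try lia; auto.
  rewrite !IHn by lia. ring.
Qed.

Lemma bin_nn n : bin n n = 1.
Proof. induction n; simpl; auto. rewrite IHn, bin_gt by lia. ring. Qed.

Lemma binomR_bin n k : (k <= n)%nat -> binomR n k = bin n k.
Proof.
  unfold binomR. revert k; induction n; intros k H.
  - destruct k; [|lia]. simpl. unfold Binomial.C. simpl. field.
  - destruct k.
    + simpl. unfold Binomial.C. rewrite Nat.sub_0_r. simpl (fact 0). simpl INR at 2.
      field. apply INR_fact_neq_0.
    + simpl. destruct (Nat.eq_dec k n) as [->|Hn].
      * rewrite C_n_n, bin_nn, bin_gt by lia. ring.
      * rewrite <- pascal by lia. rewrite !IHn by lia. reflexivity.
Qed.

Lemma binomR_fact r s : (s <= r)%nat ->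
  binomR r s / INR (fact r) = / (INR (fact s) * INR (fact (r - s))).
Proof.
  intros H. unfold binomR, Binomial.C.
  pose proof (INR_fact_neq_0 r). pose proof (INR_fact_neq_0 s). pose proof (INR_fact_neq_0 (r-s)).
  field. auto.
Qed.

Lemma pascal_sum (f : nat -> R) N :
  sum_f_R0 (fun s => (-1) ^ s * bin (S N) s * f s) (S N) =
  sum_f_R0 (fun s => (-1) ^ s * bin N s * (f s - f (S s))) N.
Proof.
  rewrite sum_S_l.
  transitivity (f 0%nat + (sum_f_R0 (fun i => - ((-1)^i * bin N i * f (S i))) N
               + sum_f_R0 (fun i => (-1) ^ (S i) * bin N (S i) * f (S i)) N)).
  - rewrite <- sum_plus. f_equal. rewrite bin_0. simpl. ring. apply sum_ext. intros i _.
    simpl. ring.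
  - rewrite sum_opp.
    assert (E : f 0%nat + sum_f_R0 (fun i => (-1) ^ S i * bin N (S i) * f (S i)) N =
                sum_f_R0 (fun s => (-1) ^ s * bin N s * f s) N).
    { rewrite <- (Rplus_0_r (sum_f_R0 (fun s => (-1) ^ s * bin N s * f s) N)).
      replace 0 with ((-1) ^ S N * bin N (S N) * f (S N)) by (rewrite bin_gt by lia; ring).
      rewrite <- (sum_S_r (fun s => (-1)^s * bin N s * f s) N), (sum_S_l (fun s => (-1)^s * bin N s * f s) N).
      rewrite bin_0. simpl pow. ring. }
    replace (sum_f_R0 (fun i => (-1) ^ i * bin N i * (f i - f (S i))) N)
      with (sum_f_R0 (fun i => (-1) ^ i * bin N i * f i) N - sum_f_R0 (fun i => (-1) ^ i * bin N i * f (S i)) N).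
    2:{ rewrite <- sum_minus'. apply sum_ext; intros; ring. }
    rewrite <- E. ring.
Qed.
(* ---------- polynomial-degree predicate via finite differences ---------- *)
Fixpoint Pd (d : nat) (f : R -> R) : Prop :=
  match d with
  | O => forall x, f x = f 0
  | S d' => Pd d' (fun x => f (x + 1) - f x)
  end.

Lemma Pd_ext d : forall f g, (forall x, f x = g x) -> Pd d f -> Pd d g.
Proof.
  induction d; intros f g E H; simpl in *.
  - intros x. rewrite <- !E. auto.
  - eapply IHd; [|exact H]. intros x; simpl. rewrite !E. reflexivity.
Qed.

Lemma Pd_const c : Pd 0 (fun _ => c).
Proof. simpl. reflexivity. Qed.

Lemma Pd_S d : forall f, Pd d f -> Pd (S d) f.
Proof.
  induction d; intros f H.
  - simpl in *. intros x. rewrite (H (x+1)), (H x), (H (0+1)). ring.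
  - change (Pd (S d) (fun x => f (x + 1) - f x)). apply IHd. exact H.
Qed.

Lemma Pd_le d d' f : (d <= d')%nat -> Pd d f -> Pd d' f.
Proof. induction 1; auto. intros H'. apply Pd_S; auto. Qed.

Lemma Pd_lin d : forall f g a b, Pd d f -> Pd d g -> Pd d (fun x => a * f x + b * g x).
Proof.
  induction d; intros f g a b Hf Hg; simpl in *.
  - intros x. rewrite Hf, Hg. reflexivity.
  - eapply Pd_ext; [|apply (IHd _ _ a b Hf Hg)]. intros x; simpl; ring.
Qed.

Lemma Pd_shift d : forall f t, Pd d f -> Pd d (fun x => f (x + t)).
Proof.
  induction d; intros f t Hf; simpl in *.
  - intros x. rewrite (Hf (x+t)), (Hf (0+t)). reflexivity.
  - eapply Pd_ext; [|apply (IHd _ t Hf)]. intros x; simpl.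
    replace (x + 1 + t) with (x + t + 1) by ring. reflexivity.
Qed.

Lemma Pd_mul_lin d : forall f a b, Pd d f -> Pd (S d) (fun x => (a + b * x) * f x).
Proof.
  induction d; intros f a b Hf.
  - simpl in *. intros x. rewrite (Hf (x+1)), (Hf x), (Hf (0+1)). ring.
  - change (Pd (S d) (fun x => (a + b * (x + 1)) * f (x + 1) - (a + b * x) * f x)).
    simpl in Hf.
    apply Pd_ext with (f := fun x => 1 * ((a + b * x) * (f (x + 1) - f x)) + b * f (x + 1)).
    { intros x; ring. }
    apply Pd_lin.
    + apply IHd. exact Hf.
    + apply Pd_shift. exact Hf.
Qed.

Lemma Pd_poch d k A B : forall f, Pd d f -> Pd (d + k) (fun x => f x * poch (A + B * x) k).
Proof.
  induction k; intros f Hf.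
  - rewrite Nat.add_0_r. eapply Pd_ext; [|exact Hf]. intros; simpl; ring.
  - rewrite Nat.add_succ_r.
    apply Pd_ext with (f := fun x => ((A + INR k) + B * x) * (f x * poch (A + B * x) k)).
    { intros x; simpl; ring. }
    apply Pd_mul_lin. apply IHk. exact Hf.
Qed.

Lemma vanish N : forall d f, (d < N)%nat -> Pd d f ->
  sum_f_R0 (fun s => (-1) ^ s * bin N s * f (INR s)) N = 0.
Proof.
  induction N; intros d f Hd Hf. lia.
  rewrite (pascal_sum (fun s => f (INR s))).
  destruct d.
  - apply sum_zero. intros i _. simpl in Hf. rewrite (Hf (INR i)), (Hf (INR (S i))). ring.
  - simpl in Hf.
    transitivity (- sum_f_R0 (fun s => (-1) ^ s * bin N s * (fun x => f (x + 1) - f x) (INR s)) N).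
    + rewrite <- sum_opp. apply sum_ext. intros i _. rewrite S_INR. ring.
    + pose proof (IHN d (fun x => f (x + 1) - f x) ltac:(lia) Hf) as H. cbv beta in H |- *.
      rewrite H. ring.
Qed.

Lemma poch_div A B y m : exists g, Pd m g /\
  forall s, poch (A + B * s) (S m) - poch (A + B * y) (S m) = (s - y) * g s.
Proof.
  induction m.
  - exists (fun _ => B). split. apply Pd_const. intros s. simpl. ring.
  - destruct IHm as [g [Hg E]].
    exists (fun s => ((A + INR (S m)) + B * s) * g s + B * poch (A + B * y) (S m)).
    split.
    + apply Pd_ext with (f := fun s => 1 * (((A + INR (S m)) + B * s) * g s) + B * poch (A + B * y) (S m)).
      { intros; ring. }
      apply Pd_lin. apply Pd_mul_lin; exact Hg.
      apply (Pd_le 0). lia. apply Pd_const.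
    + intros s. change (poch (A + B * s) (S m) * (A + B * s + INR (S m)) -
                        poch (A + B * y) (S m) * (A + B * y + INR (S m)) =
                        (s - y) * ((A + INR (S m) + B * s) * g s + B * poch (A + B * y) (S m))).
      replace (poch (A + B * s) (S m)) with (poch (A + B * y) (S m) + (s - y) * g s) by (rewrite <- E; ring).
      ring.
Qed.

Lemma partial_frac m : forall c, 0 < c ->
  sum_f_R0 (fun s => (-1) ^ s * bin m s * / (c + INR s)) m = INR (fact m) / poch c (S m).
Proof.
  induction m; intros c Hc.
  - simpl. field. lra.
  - rewrite (pascal_sum (fun s => / (c + INR s))).
    transitivity (sum_f_R0 (fun s => (-1) ^ s * bin m s * / (c + INR s)) m -
                  sum_f_R0 (fun s => (-1) ^ s * bin m s * / ((c + 1) + INR s)) m).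
    + rewrite <- sum_minus'. apply sum_ext. intros i _. rewrite S_INR.
      replace (c + (INR i + 1)) with (c + 1 + INR i) by ring. ring.
    + rewrite IHm by lra. rewrite IHm by lra.
      rewrite (poch_S_l c (S m)), (poch_S_l c m).
      change (poch (c + 1) (S m)) with (poch (c + 1) m * (c + 1 + INR m)).
      rewrite fact_simpl, mult_INR, !S_INR.
      assert (0 < poch (c + 1) m) by (apply poch_pos; lra).
      pose proof (pos_INR m).
      field. repeat split; lra.
Qed.

Lemma T_identity m A B c : 0 < c ->
  sum_f_R0 (fun r => sum_f_R0 (fun s =>
     (-1) ^ s * binomR r s / INR (fact r) * poch c r * poch (A + B * INR s) m) r) m
  = poch (A + B * (- c)) m.
Proof.
  intros Hc.
  rewrite tri_swap.
  transitivity (poch c (S m) / INR (fact m) *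
     sum_f_R0 (fun s => (-1) ^ s * bin m s * poch (A + B * INR s) m * / (c + INR s)) m).
  - rewrite sum_scal_l. apply sum_ext. intros s Hs.
    transitivity ((-1) ^ s * poch (A + B * INR s) m / INR (fact s) * poch c s *
                  sum_f_R0 (fun t => poch (c + INR s) t / INR (fact t)) (m - s)).
    + rewrite sum_scal_l. apply sum_ext. intros t Ht.
      assert (Hb : binomR (s + t) s = INR (fact (s + t)) / (INR (fact s) * INR (fact t))).
      { unfold binomR, Binomial.C. replace (s + t - s)%nat with t by lia. reflexivity. }
      rewrite Hb, poch_add.
      pose proof (INR_fact_neq_0 s). pose proof (INR_fact_neq_0 t). pose proof (INR_fact_neq_0 (s+t)).
      field. auto.
    + rewrite hockey.
      replace (poch c (S m)) with (poch c s * (c + INR s) * poch (c + INR s + 1) (m - s)).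
      2:{ replace (S m) with (s + S (m - s))%nat by lia. rewrite poch_add, poch_S_l. ring. }
      rewrite <- binomR_bin by lia.
      unfold binomR, Binomial.C.
      pose proof (INR_fact_neq_0 s). pose proof (INR_fact_neq_0 (m - s)). pose proof (INR_fact_neq_0 m).
      pose proof (pos_INR s).
      field. repeat split; auto; lra.
  - destruct m.
    + simpl. field. lra.
    + destruct (poch_div A B (- c) m) as [g [Hg E]].
      transitivity (poch c (S (S m)) / INR (fact (S m)) *
        (sum_f_R0 (fun s => (-1) ^ s * bin (S m) s * g (INR s)) (S m) +
         poch (A + B * - c) (S m) * sum_f_R0 (fun s => (-1) ^ s * bin (S m) s * / (c + INR s)) (S m))).
      * f_equal. rewrite sum_scal_l, <- sum_plus. apply sum_ext. intros s _.
        replace (poch (A + B * INR s) (S m)) with (poch (A + B * - c) (S m) + (INR s - - c) * g (INR s))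
          by (rewrite <- E; ring).
        pose proof (pos_INR s). field. lra.
      * rewrite (vanish (S m) m g) by (auto; lia).
        rewrite partial_frac by auto.
        assert (0 < poch c (S (S m))) by (apply poch_pos; lra).
        pose proof (INR_fact_neq_0 (S m)).
        field. split; lra.
Qed.

Lemma ball_R (l e y : R) : ball l e y <-> Rabs (y - l) < e.
Proof. reflexivity. Qed.

Lemma ev_box (a0 b0 : R) : 0 < a0 ->
  filter_prod (at_right 0) (Rbar_locally p_infty) (fun ab => 0 < fst ab < a0 /\ b0 < snd ab).
Proof.
  intros H. apply (Filter_prod _ _ _ (fun a => 0 < a < a0) (fun b => b0 < b)).
  - exists (mkposreal a0 H). intros y Hy Hy0. apply ball_R in Hy.
    change (Rabs (y - 0) < a0) in Hy. simpl in Hy0 |- *. rewrite Rminus_0_r in Hy. apply Rabs_def2 in Hy. lra.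
  - exists b0. auto.
  - intros x y H1 H2. simpl. auto.
Qed.

Lemma gen_nonneg h l : (forall x, 0 < x -> 0 <= h x) ->
  is_RInt_gen h (at_right 0) (Rbar_locally p_infty) l -> 0 <= l.
Proof.
  intros Hh H. destruct (Rle_lt_dec 0 l) as [ok|neg]; auto. exfalso.
  assert (Hl : 0 < - l / 2) by lra.
  assert (H' := H (ball l (mkposreal _ Hl)) (locally_ball l (mkposreal _ Hl))).
  unfold filtermapi in H'.
  assert (H2 := filter_and _ _ H' (ev_box 1 1 Rlt_0_1)).
  apply filter_ex in H2. destruct H2 as [[a b] [[y [Hy Hb]] [[Ha1 Ha2] Hb1]]].
  simpl in *. change (Rabs (y - l) < - l / 2) in Hb. apply Rabs_def2 in Hb.
  assert (0 <= y).
  { rewrite <- (is_RInt_unique _ _ _ _ Hy). apply RInt_ge_0. lra. eexists; eauto.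
    intros x Hx. apply Hh. lra. }
  lra.
Qed.

Lemma gen_le f g lf lg : (forall x, 0 < x -> f x <= g x) ->
  is_RInt_gen f (at_right 0) (Rbar_locally p_infty) lf ->
  is_RInt_gen g (at_right 0) (Rbar_locally p_infty) lg -> lf <= lg.
Proof.
  intros Hfg Hf Hg.
  assert (H := is_RInt_gen_minus g f lg lf Hg Hf).
  apply gen_nonneg in H. change (0 <= lg - lf) in H. lra.
  intros x Hx. change (0 <= g x - f x). specialize (Hfg x Hx). lra.
Qed.

Lemma gen_unique f l : is_RInt_gen f (at_right 0) (Rbar_locally p_infty) l ->
  @RInt_gen R_CompleteNormedModule f (at_right 0) (Rbar_locally p_infty) = l.
Proof. intros H. exact (@is_RInt_gen_unique R_CompleteNormedModule _ _ _ _ f l H). Qed.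

Lemma conv_pos (f : R -> R) (M : R) :
  (forall x, 0 < x -> continuous f x) -> (forall x, 0 < x -> 0 <= f x) ->
  (forall a b, 0 < a -> a <= b -> RInt f a b <= M) ->
  exists l, is_RInt_gen f (at_right 0) (Rbar_locally p_infty) l /\
            (forall a b, 0 < a -> a <= b -> RInt f a b <= l).
Proof.
  intros Hc Hp Hb.
  assert (Hex : forall a b, 0 < a -> a <= b -> ex_RInt f a b).
  { intros a b Ha Hab. apply (@ex_RInt_continuous R_CompleteNormedModule). intros z Hz. apply Hc.
    rewrite Rmin_left in Hz by lra. lra. }
  set (E := fun y => exists a b, 0 < a /\ a <= b /\ y = RInt f a b).
  assert (HbE : bound E). { exists M. intros y [a [b [Ha [Hab ->]]]]. apply Hb; auto. }
  assert (HeE : exists y, E y). { exists (RInt f 1 1). exists 1, 1. repeat split; lra. }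
  destruct (completeness E HbE HeE) as [l [Hub Hlub]].
  exists l. split.
  2:{ intros a b Ha Hab. apply Hub. exists a, b. auto. }
  intros P [eps HP]. simpl.
  assert (Hfind : exists a0 b0, 0 < a0 /\ a0 <= b0 /\ l - eps < RInt f a0 b0).
  { apply Classical_Prop.NNPP. intros Hn.
    assert (l <= l - eps).
    { apply Hlub. intros y [a [b [Ha [Hab ->]]]].
      apply Rnot_lt_le. intros Hlt. apply Hn. exists a, b. auto. }
    destruct eps; simpl in *; lra. }
  destruct Hfind as [a0 [b0 [Ha0 [Hab0 Hl0]]]].
  unfold filtermapi.
  apply (filter_imp (fun ab => 0 < fst ab < a0 /\ b0 < snd ab)); [| apply ev_box; auto].
  intros [a b] [[Ha1 Ha2] Hb1]. simpl in *.
  exists (RInt f a b). split.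
  - apply (@RInt_correct R_CompleteNormedModule). apply Hex; lra.
  - pose proof (cond_pos eps). apply HP. apply ball_R. apply Rabs_def1.
    + assert (RInt f a b <= l) by (apply Hub; exists a, b; repeat split; lra). lra.
    + assert (RInt f a0 b0 <= RInt f a b).
      { rewrite <- (RInt_Chasles f a a0 b) by (apply Hex; lra).
        rewrite <- (RInt_Chasles f a0 b0 b) by (apply Hex; lra).
        assert (0 <= RInt f a a0) by (apply RInt_ge_0; [lra| apply Hex; lra| intros; apply Hp; lra]).
        assert (0 <= RInt f b0 b) by (apply RInt_ge_0; [lra| apply Hex; lra| intros; apply Hp; lra]).
        change (RInt f a0 b0 <= RInt f a a0 + (RInt f a0 b0 + RInt f b0 b)). lra. }
      lra.
Qed.

Lemma ext_pos (f g : R -> R) l : (forall x, 0 < x -> f x = g x) ->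
  is_RInt_gen f (at_right 0) (Rbar_locally p_infty) l ->
  is_RInt_gen g (at_right 0) (Rbar_locally p_infty) l.
Proof.
  intros E H. apply (is_RInt_gen_ext f g l); auto.
  apply (Filter_prod _ _ _ (fun a => 0 < a) (fun b => 0 < b)).
  - exists (mkposreal 1 Rlt_0_1). intros y _ Hy. exact Hy.
  - exists 0. intros x Hx. exact Hx.
  - intros a b Ha Hb x [H1 H2]. apply E. simpl in H1.
    apply Rle_lt_trans with (2 := H1). apply Rmin_glb; lra.
Qed.

Lemma locally_pos x : 0 < x -> locally x (fun y => 0 < y).
Proof.
  intros Hx. exists (mkposreal x Hx). intros y Hy.
  change (Rabs (y - x) < x) in Hy. apply Rabs_def2 in Hy. lra.
Qed.

Lemma gen_ftc (F df : R -> R) la lb :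
  (forall x, 0 < x -> is_derive F x (df x)) -> (forall x, 0 < x -> continuous df x) ->
  filterlim F (at_right 0) (locally la) -> filterlim F (Rbar_locally p_infty) (locally lb) ->
  is_RInt_gen df (at_right 0) (Rbar_locally p_infty) (lb - la).
Proof.
  intros Hd Hc Ha Hb.
  assert (E : forall x, 0 < x -> Derive F x = df x) by (intros; apply is_derive_unique; auto).
  assert (Hpos : forall (P : R -> Prop), (forall x, 0 < x -> P x) ->
     filter_prod (at_right 0) (Rbar_locally p_infty)
       (fun ab => forall x, Rmin (fst ab) (snd ab) <= x /\ x <= Rmax (fst ab) (snd ab) -> P x)).
  { intros P HP. apply (filter_imp (fun ab => 0 < fst ab < 1 /\ 1 < snd ab)); [| apply ev_box; lra].
    intros [a b] [[H1 H2] H3] x [Hx1 Hx2]. simpl in *. apply HP.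
    rewrite Rmin_left in Hx1 by lra. lra. }
  apply ext_pos with (f := Derive F). exact E.
  apply is_RInt_gen_Derive; auto.
  - apply Hpos. intros x Hx. eexists; apply Hd; auto.
  - apply Hpos. intros x Hx. apply (continuous_ext_loc (Derive F) df x).
    + apply filter_imp with (2 := locally_pos x Hx). intros y Hy. symmetry. apply E; auto.
    + apply Hc; auto.
Qed.
Lemma Rpower_pos x c : 0 < Rpower x c.
Proof. unfold Rpower. apply exp_pos. Qed.

Lemma Rpower_m1 x c : 0 < x -> Rpower x (c - 1) = Rpower x c / x.
Proof.
  intros Hx. unfold Rminus. rewrite Rpower_plus, Rpower_Ropp, Rpower_1 by auto. reflexivity.
Qed.

Lemma Rpower_le1 x c : 1 <= x -> c <= 0 -> Rpower x c <= 1.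
Proof.
  intros Hx Hc. rewrite <- (Rpower_O x) by lra. apply Rle_Rpower; lra.
Qed.

Lemma Rpower_ge1 x c : 1 <= x -> 0 <= c -> 1 <= Rpower x c.
Proof.
  intros Hx Hc. rewrite <- (Rpower_O x) by lra. apply Rle_Rpower; lra.
Qed.

Lemma Rpower_mono_base a b c : 0 < a -> a <= b -> 0 <= c -> Rpower a c <= Rpower b c.
Proof.
  intros Ha Hab Hc. destruct (Req_dec c 0) as [->|Hc0].
  - rewrite !Rpower_O by lra. lra.
  - destruct (Req_dec a b) as [->|Hab']. lra.
    left. apply Rlt_Rpower_l; lra.
Qed.

Lemma cont_Rp (f : R -> R) x : ex_derive f x -> continuous f x.
Proof. intros H. apply (@ex_derive_continuous R_AbsRing R_NormedModule). exact H. Qed.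

Lemma sum_ge_last (f : nat -> R) N : (forall k, 0 <= f k) -> f N <= sum_f_R0 f N.
Proof.
  intros H. destruct N. simpl. lra. rewrite tech5. pose proof (cond_pos_sum f N H). lra.
Qed.

Lemma exp_ge_pow t N : 0 <= t -> t ^ N / INR (fact N) <= exp t.
Proof.
  intros Ht. eapply Rle_trans; [| apply (exp_ge_taylor t N Ht)].
  apply (sum_ge_last (fun k => t ^ k / INR (fact k))). intros k.
  apply Rmult_le_pos. apply pow_le; auto. left. apply Rinv_0_lt_compat, INR_fact_lt_0.
Qed.

Lemma squeeze0 {F : (R -> Prop) -> Prop} {FF : Filter F} (f g : R -> R) :
  F (fun t => 0 <= f t <= g t) -> filterlim g F (locally 0) -> filterlim f F (locally 0).
Proof.
  intros Hfg Hg. apply filterlim_locally. intros eps.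
  apply filterlim_locally with (eps := eps) in Hg.
  apply (filter_imp (fun t => (0 <= f t <= g t) /\ ball 0 eps (g t))); [| apply filter_and; auto].
  intros t [[H1 H2] H3]. change (Rabs (g t - 0) < eps) in H3. change (Rabs (f t - 0) < eps).
  rewrite Rminus_0_r in *. rewrite Rabs_pos_eq in * by lra. lra.
Qed.

Lemma lim_Rpower0 s : 0 < s -> filterlim (fun t => Rpower t s) (at_right 0) (locally 0).
Proof.
  intros Hs. apply filterlim_locally. intros eps.
  assert (Hd : 0 < Rpower eps (/ s)) by apply Rpower_pos.
  exists (mkposreal _ Hd). intros y Hy Hy0.
  change (Rabs (y - 0) < Rpower eps (/ s)) in Hy. rewrite Rminus_0_r, Rabs_pos_eq in Hy by lra.
  change (Rabs (Rpower y s - 0) < eps). rewrite Rminus_0_r, Rabs_pos_eq by (left; apply Rpower_pos).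
  replace (pos eps) with (Rpower (Rpower eps (/ s)) s).
  apply Rlt_Rpower_l; lra.
  rewrite Rpower_mult. replace (/ s * s) with 1 by (field; lra). apply Rpower_1. apply cond_pos.
Qed.

Lemma lim_Rpower_inf b : 0 < b -> filterlim (fun x => Rpower (1 + x) (- b)) (Rbar_locally p_infty) (locally 0).
Proof.
  intros Hb. apply filterlim_locally. intros eps.
  exists (Rpower eps (- / b)). intros x Hx.
  change (Rabs (Rpower (1 + x) (- b) - 0) < eps). rewrite Rminus_0_r, Rabs_pos_eq by (left; apply Rpower_pos).
  rewrite Rpower_Ropp.
  pose proof (cond_pos eps) as He.
  assert (HM : 0 < Rpower eps (- / b)) by apply Rpower_pos.
  assert (Rpower (Rpower eps (- / b)) b < Rpower (1 + x) b) by (apply Rlt_Rpower_l; lra).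
  rewrite Rpower_mult in H. replace (- / b * b) with (- (1)) in H by (field; lra).
  rewrite Rpower_Ropp, Rpower_1 in H by auto.
  replace (pos eps) with (/ / eps) by (field; lra).
  apply Rinv_lt_contravar; auto.
  apply Rmult_lt_0_compat. apply Rinv_0_lt_compat; auto. apply Rpower_pos.
Qed.

Lemma lim_inv_inf C : filterlim (fun x => C / x) (Rbar_locally p_infty) (locally 0).
Proof.
  apply filterlim_locally. intros eps. pose proof (cond_pos eps) as He.
  exists (Rabs C / eps + 1). intros x Hx.
  change (Rabs (C / x - 0) < eps). rewrite Rminus_0_r.
  assert (0 <= Rabs C / eps) by (apply Rmult_le_pos; [apply Rabs_pos| left; apply Rinv_0_lt_compat; lra]).
  unfold Rdiv. rewrite Rabs_mult, Rabs_inv, (Rabs_pos_eq x) by lra.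
  apply (Rmult_lt_reg_r x). lra. rewrite Rmult_assoc, Rinv_l by lra.
  apply (Rmult_lt_reg_r (/ eps)). apply Rinv_0_lt_compat; lra.
  replace (eps * x * / eps) with x by (field; lra). lra.
Qed.
Definition bint (a b x : R) := Rpower x (a - 1) * Rpower (1 + x) (- (a + b)).
Definition gint (s t : R) := Rpower t (s - 1) * exp (- t).

Lemma bint_cont a b x : 0 < x -> continuous (bint a b) x.
Proof. intros Hx. apply cont_Rp. unfold bint, Rpower. auto_derive. lra. Qed.

Lemma gint_cont s x : 0 < x -> continuous (gint s) x.
Proof. intros Hx. apply cont_Rp. unfold gint, Rpower. auto_derive. lra. Qed.

Lemma bint_pos a b x : 0 < x -> 0 < bint a b x.
Proof. intros; unfold bint; apply Rmult_lt_0_compat; apply Rpower_pos. Qed.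

Lemma gint_pos s x : 0 < x -> 0 < gint s x.
Proof. intros; unfold gint; apply Rmult_lt_0_compat; [apply Rpower_pos| apply exp_pos]. Qed.

Lemma conv_cmp (f phi : R -> R) K M :
  (forall x, 0 < x -> continuous f x) -> (forall x, 0 < x -> continuous phi x) ->
  (forall x, 0 < x -> 0 <= f x <= K * phi x) -> 0 <= K ->
  (forall a b, 0 < a -> a <= b -> RInt phi a b <= M) ->
  exists l, is_RInt_gen f (at_right 0) (Rbar_locally p_infty) l /\
            (forall a b, 0 < a -> a <= b -> RInt f a b <= l).
Proof.
  intros Hf Hphi Hb HK HM.
  apply (conv_pos f (K * M)); auto.
  - intros x Hx; apply Hb; auto.
  - intros a b Ha Hab.
    assert (Hexf : ex_RInt f a b).
    { apply (@ex_RInt_continuous R_CompleteNormedModule). intros z Hz. apply Hf.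
      rewrite Rmin_left in Hz by lra. lra. }
    assert (Hexp : ex_RInt phi a b).
    { apply (@ex_RInt_continuous R_CompleteNormedModule). intros z Hz. apply Hphi.
      rewrite Rmin_left in Hz by lra. lra. }
    apply Rle_trans with (RInt (fun x => K * phi x) a b).
    + apply RInt_le; auto. apply ex_RInt_scal with (k := K) in Hexp. exact Hexp.
      intros x Hx. apply Hb. lra.
    + replace (RInt (fun x => K * phi x) a b) with (K * RInt phi a b)
        by (symmetry; exact (RInt_scal phi a b K Hexp)).
      apply Rmult_le_compat_l; auto.
Qed.

Lemma pos_of_partial (f : R -> R) l : (forall x, 0 < x -> continuous f x) -> (forall x, 0 < x -> 0 < f x) ->
  (forall a b, 0 < a -> a <= b -> RInt f a b <= l) -> 0 < l.
Proof.
  intros Hc Hp H. apply Rlt_le_trans with (RInt f 1 2); [| apply H; lra].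
  apply RInt_gt_0. lra. intros; apply Hp; lra. intros; apply Hc; lra.
Qed.

Lemma phi1_bound a : 0 < a -> forall al be, 0 < al -> al <= be -> RInt (bint a 1) al be <= / a.
Proof.
  intros Ha al be Hal Hab.
  set (G := fun x => Rpower x a * Rpower (1 + x) (- a) / a).
  assert (HG : is_RInt (bint a 1) al be (minus (G be) (G al))).
  { apply (@is_RInt_derive R_CompleteNormedModule).
    - intros x Hx. rewrite Rmin_left in Hx by lra. assert (0 < x) by lra.
      unfold bint, G. rewrite Rpower_m1 by lra.
      replace (- (a + 1)) with (- a - 1) by ring. rewrite (Rpower_m1 (1 + x)) by lra.
      unfold Rpower. auto_derive. lra. field. lra.
    - intros x Hx. rewrite Rmin_left in Hx by lra. apply bint_cont. lra. }
  rewrite (is_RInt_unique _ _ _ _ HG). change (G be - G al <= / a).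
  assert (0 <= G al).
  { unfold G. unfold Rdiv. apply Rmult_le_pos. left; apply Rmult_lt_0_compat; apply Rpower_pos.
    left; apply Rinv_0_lt_compat; auto. }
  assert (G be <= / a).
  { unfold G. rewrite Rpower_Ropp.
    assert (Rpower be a < Rpower (1 + be) a) by (apply Rlt_Rpower_l; lra).
    pose proof (Rpower_pos be a). pose proof (Rpower_pos (1 + be) a).
    assert (Hq : Rpower be a * / Rpower (1 + be) a <= 1).
    { apply Rmult_le_reg_r with (Rpower (1 + be) a); auto.
      rewrite Rmult_assoc, Rinv_l, Rmult_1_r, Rmult_1_l; lra. }
    unfold Rdiv. rewrite <- (Rmult_1_l (/ a)) at 2. apply Rmult_le_compat_r.
    left; apply Rinv_0_lt_compat; auto. exact Hq. }
  lra.
Qed.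

Definition phi2 (b x : R) := Rpower (1 + x) (- (b + 1)).

Lemma phi2_cont b x : 0 < x -> continuous (phi2 b) x.
Proof. intros Hx. apply cont_Rp. unfold phi2, Rpower. auto_derive. lra. Qed.

Lemma phi2_bound b : 0 < b -> forall al be, 0 < al -> al <= be -> RInt (phi2 b) al be <= / b.
Proof.
  intros Hb al be Hal Hab.
  set (G := fun x => - Rpower (1 + x) (- b) / b).
  assert (HG : is_RInt (phi2 b) al be (minus (G be) (G al))).
  { apply (@is_RInt_derive R_CompleteNormedModule).
    - intros x Hx. rewrite Rmin_left in Hx by lra. assert (0 < x) by lra.
      unfold phi2, G.
      replace (- (b + 1)) with (- b - 1) by ring. rewrite (Rpower_m1 (1 + x)) by lra.
      unfold Rpower. auto_derive. lra. field. lra.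
    - intros x Hx. rewrite Rmin_left in Hx by lra. apply phi2_cont. lra. }
  rewrite (is_RInt_unique _ _ _ _ HG). change (G be - G al <= / b).
  unfold G. pose proof (Rpower_pos (1 + be) (- b)).
  assert (Rpower (1 + al) (- b) <= 1) by (apply Rpower_le1; lra).
  apply (Rmult_le_reg_r b); auto. unfold Rdiv. rewrite Rinv_l by lra.
  replace ((- Rpower (1 + be) (- b) * / b - - Rpower (1 + al) (- b) * / b) * b)
    with (Rpower (1 + al) (- b) - Rpower (1 + be) (- b)) by (field; lra). lra.
Qed.

Lemma beta_conv_aux a b : 0 < a -> 0 < b -> (1 <= a \/ 1 <= b) ->
  exists l, is_RInt_gen (bint a b) (at_right 0) (Rbar_locally p_infty) l /\ 0 < l.
Proof.
  intros Ha Hb [H1|H1].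
  - destruct (conv_cmp (bint a b) (phi2 b) 1 (/ b)) as [l [Hl Hp]].
    + intros; apply bint_cont; auto.
    + intros; apply phi2_cont; auto.
    + intros x Hx. split. left; apply bint_pos; auto. rewrite Rmult_1_l. unfold bint, phi2.
      apply Rle_trans with (Rpower (1 + x) (a - 1) * Rpower (1 + x) (- (a + b))).
      * apply Rmult_le_compat_r. left; apply Rpower_pos. apply Rpower_mono_base; lra.
      * rewrite <- Rpower_plus. right. f_equal. ring.
    + lra.
    + apply phi2_bound; auto.
    + exists l; split; auto. eapply pos_of_partial; eauto. intros; apply bint_cont; auto.
      intros; apply bint_pos; auto.
  - destruct (conv_cmp (bint a b) (bint a 1) 1 (/ a)) as [l [Hl Hp]].
    + intros; apply bint_cont; auto.
    + intros; apply bint_cont; auto.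
    + intros x Hx. split. left; apply bint_pos; auto. rewrite Rmult_1_l. unfold bint.
      apply Rmult_le_compat_l. left; apply Rpower_pos. apply Rle_Rpower; lra.
    + lra.
    + apply phi1_bound; auto.
    + exists l; split; auto. eapply pos_of_partial; eauto. intros; apply bint_cont; auto.
      intros; apply bint_pos; auto.
Qed.

Lemma bint_split a b x : 0 < x -> bint a b x = bint (a + 1) b x + bint a (b + 1) x.
Proof.
  intros Hx. unfold bint.
  replace (- (a + 1 + b)) with (- (a + b) - 1) by ring.
  replace (- (a + (b + 1))) with (- (a + b) - 1) by ring.
  replace (a + 1 - 1) with a by ring.
  rewrite !Rpower_m1 by lra. field. lra.
Qed.

Lemma beta_conv a b : 0 < a -> 0 < b ->
  exists l, is_RInt_gen (bint a b) (at_right 0) (Rbar_locally p_infty) l /\ 0 < l.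
Proof.
  intros Ha Hb.
  destruct (Rle_lt_dec 1 a) as [H|H]. apply beta_conv_aux; auto.
  destruct (Rle_lt_dec 1 b) as [H'|H']. apply beta_conv_aux; auto.
  destruct (beta_conv_aux (a + 1) b) as [l1 [H1 P1]]; try lra.
  destruct (beta_conv_aux a (b + 1)) as [l2 [H2 P2]]; try lra.
  exists (l1 + l2). split; [| lra].
  apply ext_pos with (f := fun x => plus (bint (a + 1) b x) (bint a (b + 1) x)).
  intros x Hx. rewrite (bint_split a b x Hx). reflexivity.
  apply (is_RInt_gen_plus _ _ l1 l2 H1 H2).
Qed.

Lemma gint_le s t : 0 < s -> 0 < t -> forall N, s + 1 <= INR N ->
  gint s t <= INR (fact N) * exp 1 * bint s 1 t.
Proof.
  intros Hs Ht N HN. unfold gint, bint.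
  rewrite Rpower_Ropp.
  assert (Hp1 : Rpower (1 + t) (s + 1) <= (1 + t) ^ N).
  { rewrite <- Rpower_pow by lra. apply Rle_Rpower; lra. }
  assert (He : (1 + t) ^ N <= INR (fact N) * exp (1 + t)).
  { pose proof (exp_ge_pow (1 + t) N ltac:(lra)). pose proof (INR_fact_lt_0 N).
    unfold Rdiv in H. apply (Rmult_le_compat_l (INR (fact N))) in H; [| lra].
    rewrite <- Rmult_assoc, (Rmult_comm (INR (fact N))), Rmult_assoc, Rinv_r, Rmult_1_r in H; lra. }
  rewrite exp_plus in He. rewrite exp_Ropp.
  pose proof (exp_pos t). pose proof (Rpower_pos t (s - 1)). pose proof (Rpower_pos (1 + t) (s + 1)).
  replace (s + 1) with (1 + s) in * by ring.
  apply (Rmult_le_reg_r (exp t * Rpower (1 + t) (1 + s))).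
  apply Rmult_lt_0_compat; lra.
  replace (Rpower t (s - 1) * / exp t * (exp t * Rpower (1 + t) (1 + s))) with
    (Rpower t (s - 1) * Rpower (1 + t) (1 + s)) by (field; lra).
  replace (INR (fact N) * exp 1 * (Rpower t (s - 1) * / Rpower (1 + t) (1 + s)) *
     (exp t * Rpower (1 + t) (1 + s))) with (Rpower t (s - 1) * (INR (fact N) * (exp 1 * exp t)))
    by (field; lra).
  apply Rmult_le_compat_l; lra.
Qed.

Lemma gamma_conv s : 0 < s ->
  is_RInt_gen (gint s) (at_right 0) (Rbar_locally p_infty) (Gamma s) /\ 0 < Gamma s.
Proof.
  intros Hs.
  destruct (INR_unbounded (s + 1)) as [N HN].
  destruct (conv_cmp (gint s) (bint s 1) (INR (fact N) * exp 1) (/ s)) as [l [Hl Hp]].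
  - intros; apply gint_cont; auto.
  - intros; apply bint_cont; auto.
  - intros x Hx. split. left; apply gint_pos; auto. apply gint_le; auto. lra.
  - left. apply Rmult_lt_0_compat. apply INR_fact_lt_0. apply exp_pos.
  - apply phi1_bound; auto.
  - assert (E : Gamma s = l).
    { pose proof (gen_unique (gint s) l Hl) as E. unfold gint in E. unfold Gamma. exact E. }
    rewrite E. split; auto. eapply pos_of_partial; eauto. intros; apply gint_cont; auto.
    intros; apply gint_pos; auto.
Qed.
Lemma gen_eq (f : R -> R) (l1 l2 : R) : is_RInt_gen f (at_right 0) (Rbar_locally p_infty) l1 ->
  is_RInt_gen f (at_right 0) (Rbar_locally p_infty) l2 -> l1 = l2.
Proof. intros H1 H2. rewrite <- (gen_unique f l1 H1). apply gen_unique. exact H2. Qed.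

Lemma lim_at0_cont (F : R -> R) : continuous F 0 -> filterlim F (at_right 0) (locally (F 0)).
Proof.
  intros H. apply (filterlim_filter_le_1 (F := locally 0)); auto.
  apply filter_le_within.
Qed.

Lemma ev_at0 (P : R -> Prop) : (forall x, 0 < x -> P x) -> at_right 0 P.
Proof. intros H. exists (mkposreal 1 Rlt_0_1). intros y _ Hy. apply H; auto. Qed.

Lemma ev_inf (P : R -> Prop) M : (forall x, M < x -> P x) -> Rbar_locally p_infty P.
Proof. intros H. exists M. auto. Qed.

Lemma lim_gam_inf s : 0 < s ->
  filterlim (fun t => Rpower t s * exp (- t)) (Rbar_locally p_infty) (locally 0).
Proof.
  intros Hs. destruct (INR_unbounded s) as [N HN].
  apply (squeeze0 _ (fun t => INR (fact (S N)) / t)); [| apply lim_inv_inf].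
  apply (ev_inf _ 1). intros t Ht. split.
  - left. apply Rmult_lt_0_compat. apply Rpower_pos. apply exp_pos.
  - assert (H1 : Rpower t s <= t ^ N). { rewrite <- Rpower_pow by lra. apply Rle_Rpower; lra. }
    pose proof (exp_ge_pow t (S N) ltac:(lra)) as H2.
    pose proof (INR_fact_lt_0 (S N)). pose proof (exp_pos t).
    rewrite exp_Ropp. simpl pow in H2.
    apply (Rmult_le_reg_r (t * exp t)). apply Rmult_lt_0_compat; lra.
    replace (Rpower t s * / exp t * (t * exp t)) with (Rpower t s * t) by (field; lra).
    replace (INR (fact (S N)) / t * (t * exp t)) with (INR (fact (S N)) * exp t) by (field; lra).
    apply Rle_trans with (t ^ N * t). apply Rmult_le_compat_r; lra.
    unfold Rdiv in H2. apply (Rmult_le_compat_l (INR (fact (S N)))) in H2; [|lra].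
    rewrite <- Rmult_assoc, (Rmult_comm (INR (fact (S N)))), Rmult_assoc, Rinv_r, Rmult_1_r in H2 by lra.
    lra.
Qed.

Lemma Gamma_rec' s : 0 < s -> Gamma (s + 1) = s * Gamma s.
Proof.
  intros Hs.
  destruct (gamma_conv s Hs) as [H1 _]. destruct (gamma_conv (s + 1) ltac:(lra)) as [H2 _].
  set (G := fun t => Rpower t s * exp (- t)).
  assert (HF : is_RInt_gen (fun t => s * gint s t - gint (s + 1) t) (at_right 0) (Rbar_locally p_infty) (0 - 0)).
  { apply (gen_ftc G).
    - intros x Hx. unfold G, gint. rewrite Rpower_m1 by lra. replace (s + 1 - 1) with s by ring.
      unfold Rpower. auto_derive. lra. field. lra.
    - intros x Hx. apply cont_Rp. unfold gint, Rpower. auto_derive. lra.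
    - apply (squeeze0 _ (fun t => Rpower t s)); [| apply lim_Rpower0; auto].
      apply ev_at0. intros t Ht. unfold G. split.
      left; apply Rmult_lt_0_compat; [apply Rpower_pos| apply exp_pos].
      pose proof (Rpower_pos t s). rewrite <- (Rmult_1_r (Rpower t s)) at 2.
      apply Rmult_le_compat_l; [lra|]. rewrite exp_Ropp. rewrite <- Rinv_1.
      apply Rinv_le_contravar. lra. pose proof (exp_ineq1_le t). lra.
    - apply lim_gam_inf; auto. }
  assert (H3 := is_RInt_gen_plus _ _ _ _ HF H2).
  assert (H4 : is_RInt_gen (fun t => s * gint s t) (at_right 0) (Rbar_locally p_infty) (s * Gamma s)).
  { apply (is_RInt_gen_scal (gint s) s (Gamma s) H1). }
  assert (E1 : 0 - 0 + Gamma (s + 1) = s * Gamma s).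
  { apply (gen_eq (fun t => s * gint s t)); auto.
    eapply ext_pos; [| exact H3]. intros x Hx. change (s * gint s x - gint (s + 1) x + gint (s + 1) x = s * gint s x). ring. }
  lra.
Qed.
Lemma Gamma_1 : Gamma 1 = 1.
Proof.
  destruct (gamma_conv 1 Rlt_0_1) as [H1 _].
  set (F := fun t => exp (- t)).
  assert (HF : is_RInt_gen (fun t => - exp (- t)) (at_right 0) (Rbar_locally p_infty) (0 - F 0)).
  { apply (gen_ftc F).
    - intros x Hx. unfold F. auto_derive. auto. ring.
    - intros x Hx. apply cont_Rp. auto_derive. auto.
    - apply lim_at0_cont. apply cont_Rp. unfold F. auto_derive. auto.
    - apply (squeeze0 _ (fun t => 1 / t)); [| apply lim_inv_inf].
      apply (ev_inf _ 0). intros t Ht. unfold F. split. left; apply exp_pos.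
      rewrite exp_Ropp. unfold Rdiv. rewrite Rmult_1_l. apply Rinv_le_contravar. auto.
      pose proof (exp_ineq1_le t). lra. }
  apply is_RInt_gen_opp in HF.
  assert (E : Gamma 1 = - (0 - F 0)).
  { apply (gen_eq (gint 1)); auto.
    eapply ext_pos; [| exact HF]. intros x Hx. unfold gint.
    replace (1 - 1) with 0 by ring. rewrite Rpower_O by auto. change (- - exp (- x) = 1 * exp (- x)). ring. }
  rewrite E. unfold F. rewrite Ropp_0, exp_0. ring.
Qed.

Definition Bv (a b : R) : R := @RInt_gen R_CompleteNormedModule (bint a b) (at_right 0) (Rbar_locally p_infty).

Lemma Bv_is a b : 0 < a -> 0 < b ->
  is_RInt_gen (bint a b) (at_right 0) (Rbar_locally p_infty) (Bv a b) /\ 0 < Bv a b.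
Proof.
  intros Ha Hb. destruct (beta_conv a b Ha Hb) as [l [Hl Hp]].
  assert (E : Bv a b = l) by (exact (gen_unique (bint a b) l Hl)).
  rewrite E. auto.
Qed.

Lemma Bv_rec a b : 0 < a -> 0 < b -> a * Bv a b = (a + b) * Bv (a + 1) b.
Proof.
  intros Ha Hb.
  destruct (Bv_is a b Ha Hb) as [H1 _]. destruct (Bv_is (a + 1) b ltac:(lra) Hb) as [H2 _].
  set (G := fun x => Rpower x a * Rpower (1 + x) (- (a + b))).
  assert (HF : is_RInt_gen (fun x => a * bint a b x - (a + b) * bint (a + 1) b x)
                (at_right 0) (Rbar_locally p_infty) (0 - 0)).
  { apply (gen_ftc G).
    - intros x Hx. unfold G, bint. rewrite (Rpower_m1 x a) by lra.
      replace (a + 1 - 1) with a by ring.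
      replace (- (a + 1 + b)) with (- (a + b) - 1) by ring. rewrite (Rpower_m1 (1 + x)) by lra.
      unfold Rpower. auto_derive. lra. field. lra.
    - intros x Hx. apply cont_Rp. unfold bint, Rpower. auto_derive. lra.
    - apply (squeeze0 _ (fun t => Rpower t a)); [| apply lim_Rpower0; auto].
      apply ev_at0. intros t Ht. unfold G. split.
      left; apply Rmult_lt_0_compat; apply Rpower_pos.
      pose proof (Rpower_pos t a). rewrite <- (Rmult_1_r (Rpower t a)) at 2.
      apply Rmult_le_compat_l; [lra|]. apply Rpower_le1; lra.
    - apply (squeeze0 _ (fun x => Rpower (1 + x) (- b))); [| apply lim_Rpower_inf; auto].
      apply (ev_inf _ 0). intros x Hx. unfold G. split.
      left; apply Rmult_lt_0_compat; apply Rpower_pos.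
      replace (- (a + b)) with (- a + - b) by ring. rewrite Rpower_plus, <- Rmult_assoc.
      rewrite <- (Rmult_1_l (Rpower (1 + x) (- b))) at 2.
      apply Rmult_le_compat_r. left; apply Rpower_pos.
      rewrite Rpower_Ropp. pose proof (Rpower_pos (1 + x) a).
      assert (Rpower x a <= Rpower (1 + x) a) by (apply Rpower_mono_base; lra).
      apply (Rmult_le_reg_r (Rpower (1 + x) a)); auto.
      rewrite Rmult_assoc, Rinv_l; lra. }
  assert (H3 : is_RInt_gen (fun x => a * bint a b x) (at_right 0) (Rbar_locally p_infty) (a * Bv a b)).
  { apply (is_RInt_gen_scal (bint a b) a (Bv a b) H1). }
  assert (H4 : is_RInt_gen (fun x => (a + b) * bint (a + 1) b x) (at_right 0) (Rbar_locally p_infty) ((a + b) * Bv (a + 1) b)).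
  { apply (is_RInt_gen_scal (bint (a + 1) b) (a + b) (Bv (a + 1) b) H2). }
  assert (H5 := is_RInt_gen_minus _ _ _ _ H3 H4).
  assert (E : a * Bv a b - (a + b) * Bv (a + 1) b = 0 - 0).
  { apply (gen_eq (fun x => a * bint a b x - (a + b) * bint (a + 1) b x)); auto. }
  lra.
Qed.

Lemma Bv_1 b : 0 < b -> Bv 1 b = / b.
Proof.
  intros Hb. destruct (Bv_is 1 b Rlt_0_1 Hb) as [H1 _].
  set (F := fun x => Rpower (1 + x) (- b) / b).
  assert (HF : is_RInt_gen (fun x => - phi2 b x) (at_right 0) (Rbar_locally p_infty) (0 - F 0)).
  { apply (gen_ftc F).
    - intros x Hx. unfold F, phi2.
      replace (- (b + 1)) with (- b - 1) by ring. rewrite (Rpower_m1 (1 + x)) by lra.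
      unfold Rpower. auto_derive. lra. field. lra.
    - intros x Hx. apply cont_Rp. unfold phi2, Rpower. auto_derive. lra.
    - apply lim_at0_cont. apply cont_Rp. unfold F, Rpower. auto_derive. lra.
    - apply (squeeze0 _ (fun x => / b * Rpower (1 + x) (- b))).
      + apply (ev_inf _ 0). intros x Hx. unfold F. pose proof (Rpower_pos (1 + x) (- b)).
        split. left; apply Rmult_lt_0_compat; auto; apply Rinv_0_lt_compat; auto.
        unfold Rdiv. rewrite Rmult_comm. lra.
      + replace 0 with (/ b * 0) by ring.
        apply (is_lim_scal_l (fun x => Rpower (1 + x) (- b)) (/ b) p_infty 0).
        apply lim_Rpower_inf; auto. }
  apply is_RInt_gen_opp in HF.
  assert (E : Bv 1 b = - (0 - F 0)).
  { apply (gen_eq (bint 1 b)); auto.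
    eapply ext_pos; [| exact HF]. intros x Hx. unfold bint, phi2.
    replace (1 - 1) with 0 by ring. rewrite Rpower_O by auto.
    replace (- (1 + b)) with (- (b + 1)) by ring.
    change (- - Rpower (1 + x) (- (b + 1)) = 1 * Rpower (1 + x) (- (b + 1))). ring. }
  rewrite E. unfold F. rewrite Rplus_0_r. unfold Rpower. rewrite ln_1, Rmult_0_r, exp_0. change (@eq R (- (0 - 1 / b)) (/ b)). field. intro; lra.
Qed.
Lemma exp_convex t al be : 0 <= t <= 1 ->
  exp (t * al + (1 - t) * be) <= t * exp al + (1 - t) * exp be.
Proof.
  intros Ht. set (m := t * al + (1 - t) * be).
  assert (H1 : exp m * (1 + (al - m)) <= exp al).
  { pose proof (exp_ineq1_le (al - m)). replace al with (m + (al - m)) at 2 by ring.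
    rewrite exp_plus. apply Rmult_le_compat_l. left; apply exp_pos. lra. }
  assert (H2 : exp m * (1 + (be - m)) <= exp be).
  { pose proof (exp_ineq1_le (be - m)). replace be with (m + (be - m)) at 2 by ring.
    rewrite exp_plus. apply Rmult_le_compat_l. left; apply exp_pos. lra. }
  apply (Rmult_le_compat_l t) in H1; [| lra].
  apply (Rmult_le_compat_l (1 - t)) in H2; [| lra].
  assert (E : t * (exp m * (1 + (al - m))) + (1 - t) * (exp m * (1 + (be - m))) = exp m)
    by (unfold m; ring).
  lra.
Qed.

Lemma young u v t : 0 < u -> 0 < v -> 0 <= t <= 1 ->
  Rpower u t * Rpower v (1 - t) <= t * u + (1 - t) * v.
Proof.
  intros Hu Hv Ht. unfold Rpower. rewrite <- exp_plus.
  rewrite <- (exp_ln u) at 2 by auto. rewrite <- (exp_ln v) at 2 by auto.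
  replace (t * ln u + (1 - t) * ln v) with (t * ln u + (1 - t) * ln v) by ring.
  apply exp_convex; auto.
Qed.

Lemma Rpower_div a b c : 0 < a -> 0 < b -> Rpower (a / b) c = Rpower a c / Rpower b c.
Proof.
  intros Ha Hb. unfold Rpower. rewrite ln_div by auto. unfold Rminus, Rdiv. rewrite Rmult_plus_distr_l, exp_plus.
  rewrite <- Ropp_mult_distr_r, exp_Ropp. reflexivity.
Qed.

Lemma holder (f1 f2 f3 : R -> R) (J1 J2 J3 t : R) : 0 <= t <= 1 ->
  (forall x, 0 < x -> 0 < f1 x) -> (forall x, 0 < x -> 0 < f2 x) ->
  (forall x, 0 < x -> f3 x = Rpower (f1 x) t * Rpower (f2 x) (1 - t)) ->
  is_RInt_gen f1 (at_right 0) (Rbar_locally p_infty) J1 ->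
  is_RInt_gen f2 (at_right 0) (Rbar_locally p_infty) J2 ->
  is_RInt_gen f3 (at_right 0) (Rbar_locally p_infty) J3 ->
  0 < J1 -> 0 < J2 -> J3 <= Rpower J1 t * Rpower J2 (1 - t).
Proof.
  intros Ht P1 P2 E H1 H2 H3 J1p J2p.
  set (C := Rpower J1 t * Rpower J2 (1 - t)).
  assert (Cp : 0 < C) by (apply Rmult_lt_0_compat; apply Rpower_pos).
  assert (H4 : is_RInt_gen (fun x => C * (t / J1 * f1 x + (1 - t) / J2 * f2 x))
                 (at_right 0) (Rbar_locally p_infty) (C * (t / J1 * J1 + (1 - t) / J2 * J2))).
  { pose proof (is_RInt_gen_scal f1 (t / J1) J1 H1) as A1.
    pose proof (is_RInt_gen_scal f2 ((1 - t) / J2) J2 H2) as A2.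
    pose proof (is_RInt_gen_plus _ _ _ _ A1 A2) as A3.
    pose proof (is_RInt_gen_scal _ C _ A3) as A4. exact A4. }
  replace C with (C * (t / J1 * J1 + (1 - t) / J2 * J2)) by (field; lra).
  apply (gen_le f3 (fun x => C * (t / J1 * f1 x + (1 - t) / J2 * f2 x)) J3 _); auto.
  intros x Hx. rewrite E by auto.
  pose proof (P1 x Hx). pose proof (P2 x Hx).
  assert (Hy := young (f1 x / J1) (f2 x / J2) t ltac:(apply Rdiv_lt_0_compat; auto)
                  ltac:(apply Rdiv_lt_0_compat; auto) Ht).
  rewrite !Rpower_div in Hy by auto.
  assert (0 < Rpower J1 t) by apply Rpower_pos. assert (0 < Rpower J2 (1 - t)) by apply Rpower_pos.
  replace (Rpower (f1 x) t / Rpower J1 t * (Rpower (f2 x) (1 - t) / Rpower J2 (1 - t)))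
    with ((Rpower (f1 x) t * Rpower (f2 x) (1 - t)) / C) in Hy by (unfold C; field; lra).
  apply (Rmult_le_compat_l C) in Hy; [| lra].
  replace (C * (Rpower (f1 x) t * Rpower (f2 x) (1 - t) / C)) with
    (Rpower (f1 x) t * Rpower (f2 x) (1 - t)) in Hy by (field; lra).
  replace (C * (t / J1 * f1 x + (1 - t) / J2 * f2 x)) with (C * (t * (f1 x / J1) + (1 - t) * (f2 x / J2)))
    by (field; lra).
  exact Hy.
Qed.

Definition LC (F : R -> R) := forall x y t, 0 < x -> 0 < y -> 0 <= t <= 1 ->
  F (t * x + (1 - t) * y) <= Rpower (F x) t * Rpower (F y) (1 - t).

Lemma LC_fam (Phi : R -> R) (fam : R -> R -> R) (P Q : R -> R) :
  (forall a x, 0 < x -> fam a x = exp (a * P x + Q x)) ->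
  (forall a, 0 < a -> is_RInt_gen (fam a) (at_right 0) (Rbar_locally p_infty) (Phi a) /\ 0 < Phi a) ->
  LC Phi.
Proof.
  intros E H x y t Hx Hy Ht.
  assert (Hm : 0 < t * x + (1 - t) * y) by nra.
  destruct (H x Hx) as [H1 P1]. destruct (H y Hy) as [H2 P2]. destruct (H _ Hm) as [H3 P3].
  apply (holder (fam x) (fam y) (fam (t * x + (1 - t) * y))); auto.
  - intros r Hr. rewrite E by auto. apply exp_pos.
  - intros r Hr. rewrite E by auto. apply exp_pos.
  - intros r Hr. rewrite !E by auto. unfold Rpower. rewrite !ln_exp, <- exp_plus. f_equal. ring.
Qed.

Lemma LC_mul F G : LC F -> LC G -> (forall x, 0 < x -> 0 < F x) -> (forall x, 0 < x -> 0 < G x) ->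
  LC (fun a => F a * G a).
Proof.
  intros HF HG PF PG x y t Hx Hy Ht.
  assert (Hm : 0 < t * x + (1 - t) * y) by nra.
  rewrite <- !Rpower_mult_distr by auto.
  replace (Rpower (F x) t * Rpower (G x) t * (Rpower (F y) (1 - t) * Rpower (G y) (1 - t)))
    with ((Rpower (F x) t * Rpower (F y) (1 - t)) * (Rpower (G x) t * Rpower (G y) (1 - t))) by ring.
  apply Rmult_le_compat; auto; left; auto.
Qed.

Lemma LC_scal F c : 0 < c -> LC F -> (forall x, 0 < x -> 0 < F x) -> LC (fun a => F a * c).
Proof.
  intros Hc HF PF x y t Hx Hy Ht.
  assert (HFx := HF x y t Hx Hy Ht).
  assert (E : Rpower c t * Rpower c (1 - t) = c).
  { rewrite <- Rpower_plus. replace (t + (1 - t)) with 1 by ring. apply Rpower_1; auto. }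
  rewrite <- !Rpower_mult_distr by auto.
  replace (Rpower (F x) t * Rpower c t * (Rpower (F y) (1 - t) * Rpower c (1 - t)))
    with ((Rpower (F x) t * Rpower (F y) (1 - t)) * (Rpower c t * Rpower c (1 - t))) by ring.
  rewrite E. apply Rmult_le_compat_r; lra.
Qed.
(* ---------- Bohr-Mollerup type uniqueness ---------- *)
Definition GamLike (F : R -> R) :=
  (forall x, 0 < x -> 0 < F x) /\ (forall x, 0 < x -> F (x + 1) = x * F x) /\ F 1 = 1 /\ LC F.

Lemma GL_fact F : GamLike F -> forall k, F (INR (S k)) = INR (fact k).
Proof.
  intros [P [R1 [F1 _]]]. induction k.
  - simpl. exact F1.
  - rewrite S_INR, R1, IHk by (apply lt_0_INR; lia).
    rewrite fact_simpl, mult_INR. reflexivity.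
Qed.

Lemma GL_poch F : GamLike F -> forall x k, 0 < x -> F (x + INR k) = poch x k * F x.
Proof.
  intros [P [R1 [F1 _]]] x k Hx. induction k.
  - simpl. rewrite Rplus_0_r. ring.
  - rewrite S_INR. replace (x + (INR k + 1)) with ((x + INR k) + 1) by ring.
    rewrite R1, IHk. simpl. ring. pose proof (pos_INR k); lra.
Qed.

Lemma GL_bounds F : GamLike F -> forall x k, 0 < x <= 1 ->
  INR (fact (S k)) / Rpower (INR (S k) + x) (1 - x) <= poch x (S k) * F x /\
  poch x (S k) * F x <= INR (fact k) * Rpower (INR (S k)) x.
Proof.
  intros HG x k Hx.
  pose proof HG as [P [R1 [F1 L]]].
  set (n := INR (S k)).
  assert (Hn : 1 <= n) by (unfold n; rewrite S_INR; pose proof (pos_INR k); lra).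
  rewrite <- (GL_poch F HG x (S k)) by lra. fold n.
  replace (x + n) with (n + x) by ring.
  assert (Fn : F n = INR (fact k)) by (apply GL_fact; auto).
  assert (Fn1 : F (n + 1) = INR (fact (S k))).
  { rewrite <- (GL_fact F HG (S k)). unfold n. rewrite (S_INR (S k)). reflexivity. }
  assert (Hfk : 0 < INR (fact k)) by apply INR_fact_lt_0.
  assert (Hfn : INR (fact (S k)) = n * INR (fact k)) by (unfold n; rewrite fact_simpl, mult_INR; reflexivity).
  split.
  -
    assert (H := L (n + x) (n + x + 1) x ltac:(lra) ltac:(lra) ltac:(lra)).
    replace (x * (n + x) + (1 - x) * (n + x + 1)) with (n + 1) in H by ring.
    rewrite Fn1, R1 in H by lra.
    assert (Hp : 0 < F (n + x)) by (apply P; lra).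
    rewrite <- Rpower_mult_distr in H by lra.
    replace (Rpower (F (n + x)) x * (Rpower (n + x) (1 - x) * Rpower (F (n + x)) (1 - x)))
      with (Rpower (n + x) (1 - x) * (Rpower (F (n + x)) x * Rpower (F (n + x)) (1 - x))) in H by ring.
    rewrite <- Rpower_plus in H. replace (x + (1 - x)) with 1 in H by ring. rewrite Rpower_1 in H by auto.
    assert (0 < Rpower (n + x) (1 - x)) by apply Rpower_pos.
    apply (Rmult_le_reg_r (Rpower (n + x) (1 - x))); auto.
    unfold Rdiv. rewrite Rmult_assoc, Rinv_l by lra. lra.
  -
    assert (H := L (n + 1) n x ltac:(lra) ltac:(lra) ltac:(lra)).
    replace (x * (n + 1) + (1 - x) * n) with (n + x) in H by ring.
    rewrite Fn1, Fn, Hfn in H.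
    rewrite <- Rpower_mult_distr in H by lra.
    replace (Rpower n x * Rpower (INR (fact k)) x * Rpower (INR (fact k)) (1 - x)) with
      (Rpower n x * (Rpower (INR (fact k)) x * Rpower (INR (fact k)) (1 - x))) in H by ring.
    rewrite <- Rpower_plus in H. replace (x + (1 - x)) with 1 in H by ring. rewrite Rpower_1 in H by auto.
    lra.
Qed.

Lemma GL_unique01 F G : GamLike F -> GamLike G -> forall x, 0 < x <= 1 -> F x = G x.
Proof.
  intros HF HG x Hx.
  assert (Gp : 0 < G x) by (destruct HG as [P _]; apply P; lra).
  assert (Key : forall k, Rabs (F x - G x) <= G x / INR (S k)).
  { intros k.
    destruct (GL_bounds F HF x k Hx) as [L1 U1].
    destruct (GL_bounds G HG x k Hx) as [L2 U2].
    set (n := INR (S k)) in *.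
    assert (Hn : 1 <= n) by (unfold n; rewrite S_INR; pose proof (pos_INR k); lra).
    set (P := poch x (S k)) in *.
    assert (Pp : 0 < P) by (apply poch_pos; lra).
    set (Lo := INR (fact (S k)) / Rpower (n + x) (1 - x)) in *.
    set (Up := INR (fact k) * Rpower n x) in *.
    assert (Hfn : INR (fact (S k)) = n * INR (fact k)) by (unfold n; rewrite fact_simpl, mult_INR; reflexivity).
    assert (Hfk : 0 < INR (fact k)) by apply INR_fact_lt_0.
    assert (Hq : Up * n <= Lo * (n + x)).
    { unfold Up, Lo. rewrite Hfn.
      assert (Hr : 0 < Rpower (n + x) (1 - x)) by apply Rpower_pos.
      assert (Hm : Rpower n x * Rpower (n + x) (1 - x) <= n + x).
      { apply Rle_trans with (Rpower (n + x) x * Rpower (n + x) (1 - x)).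
        apply Rmult_le_compat_r. lra. apply Rpower_mono_base; lra.
        rewrite <- Rpower_plus. replace (x + (1 - x)) with 1 by ring. rewrite Rpower_1 by lra. lra. }
      apply (Rmult_le_reg_r (Rpower (n + x) (1 - x))); auto.
      replace (n * INR (fact k) / Rpower (n + x) (1 - x) * (n + x) * Rpower (n + x) (1 - x))
        with (n * INR (fact k) * (n + x)) by (field; lra).
      replace (INR (fact k) * Rpower n x * n * Rpower (n + x) (1 - x)) with
        (n * INR (fact k) * (Rpower n x * Rpower (n + x) (1 - x))) by ring.
      apply Rmult_le_compat_l; nra. }
    assert (Hd : Up - Lo <= Lo / n).
    { assert (Lop : 0 < Lo).
      { unfold Lo. apply Rdiv_lt_0_compat. apply INR_fact_lt_0. apply Rpower_pos. }
      assert (Lo * x <= Lo) by nra.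
      apply (Rmult_le_reg_r n). lra. unfold Rdiv. rewrite Rmult_assoc, Rinv_l by lra. lra. }
    assert (HPd : P * Rabs (F x - G x) <= Lo / n).
    { rewrite <- (Rabs_pos_eq P) by lra. rewrite <- Rabs_mult.
      apply Rabs_le. split; nra. }
    assert (Lo <= P * G x) by lra.
    apply (Rmult_le_reg_l P); auto.
    apply Rle_trans with (Lo / n); auto. unfold Rdiv.
    rewrite <- Rmult_assoc. apply Rmult_le_compat_r. left; apply Rinv_0_lt_compat; lra. lra. }
  destruct (Req_dec (F x) (G x)) as [E|NE]; auto. exfalso.
  assert (D : 0 < Rabs (F x - G x)) by (apply Rabs_pos_lt; lra).
  destruct (INR_unbounded (G x / Rabs (F x - G x))) as [k Hk].
  assert (H := Key k).
  assert (0 < INR (S k)) by (apply lt_0_INR; lia).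
  rewrite S_INR in *.
  apply (Rmult_le_compat_r (INR k + 1)) in H; [| lra].
  unfold Rdiv in H. rewrite Rmult_assoc, Rinv_l in H by lra.
  apply (Rmult_lt_compat_r (Rabs (F x - G x))) in Hk; auto.
  unfold Rdiv in Hk. rewrite Rmult_assoc, Rinv_l in Hk by lra.
  nra.
Qed.

Lemma GL_unique F G : GamLike F -> GamLike G -> forall x, 0 < x -> F x = G x.
Proof.
  intros HF HG x Hx.
  destruct (INR_unbounded x) as [N HN].
  revert x Hx HN. induction N; intros x Hx HN.
  - simpl in HN. lra.
  - destruct (Rle_lt_dec x 1) as [H1|H1].
    + apply GL_unique01; auto.
    + destruct HF as [PF [RF _]]. destruct HG as [PG [RG _]].
      replace x with ((x - 1) + 1) by ring.
      rewrite RF, RG by lra. f_equal. apply IHN. lra. rewrite S_INR in HN. lra.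
Qed.
Lemma Gamma_pos s : 0 < s -> 0 < Gamma s.
Proof. intros Hs. apply (gamma_conv s Hs). Qed.

Lemma Gamma_rec s : 0 < s -> Gamma (s + 1) = s * Gamma s.
Proof. apply Gamma_rec'. Qed.

Lemma Gamma_GL : GamLike Gamma.
Proof.
  split; [exact Gamma_pos|]. split; [exact Gamma_rec|]. split; [exact Gamma_1|].
  apply (LC_fam Gamma gint ln (fun r => - ln r - r)).
  - intros a x Hx. unfold gint, Rpower. rewrite <- exp_plus. f_equal. ring.
  - intros a Ha. apply gamma_conv; auto.
Qed.

Lemma Beta_GL b : 0 < b -> GamLike (fun a => Bv a b * Gamma (a + b) * / Gamma b).
Proof.
  intros Hb.
  assert (Gb : 0 < Gamma b) by (apply Gamma_pos; auto).
  split; [| split; [| split]].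
  - intros x Hx. apply Rmult_lt_0_compat. apply Rmult_lt_0_compat.
    apply (Bv_is x b Hx Hb). apply Gamma_pos; lra. apply Rinv_0_lt_compat; auto.
  - intros x Hx.
    assert (E := Bv_rec x b Hx Hb).
    replace (x + 1 + b) with ((x + b) + 1) by ring. rewrite Gamma_rec by lra.
    assert (E2 : Bv (x + 1) b = x * Bv x b / (x + b)) by (rewrite E; field; lra).
    rewrite E2. field. lra.
  - replace (1 + b) with (b + 1) by ring. rewrite Gamma_rec, Bv_1 by auto. field. lra.
  - apply LC_scal. apply Rinv_0_lt_compat; auto.
    + apply LC_mul.
      * apply (LC_fam (fun a => Bv a b) (fun a => bint a b) (fun x => ln x - ln (1 + x))
                      (fun x => - ln x - b * ln (1 + x))).
        -- intros a x Hx. unfold bint, Rpower. rewrite <- exp_plus. f_equal. ring.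
        -- intros a Ha. apply Bv_is; auto.
      * apply (LC_fam (fun a => Gamma (a + b)) (fun a => gint (a + b)) ln (fun r => (b - 1) * ln r - r)).
        -- intros a x Hx. unfold gint, Rpower. rewrite <- exp_plus. f_equal. ring.
        -- intros a Ha. apply gamma_conv; lra.
      * intros x Hx. apply (Bv_is x b Hx Hb).
      * intros x Hx. apply Gamma_pos; lra.
    + intros x Hx. apply Rmult_lt_0_compat. apply (Bv_is x b Hx Hb). apply Gamma_pos; lra.
Qed.

Lemma Beta_int a b : 0 < a -> 0 < b ->
  is_RInt_gen (fun x => Rpower x (a - 1) * Rpower (1 + x) (- (a + b)))
    (at_right 0) (Rbar_locally p_infty) (Gamma a * Gamma b / Gamma (a + b)).
Proof.
  intros Ha Hb.
  assert (E := GL_unique _ _ (Beta_GL b Hb) Gamma_GL a Ha). simpl in E.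
  assert (Gb : 0 < Gamma b) by (apply Gamma_pos; auto).
  assert (Gab : 0 < Gamma (a + b)) by (apply Gamma_pos; lra).
  replace (Gamma a * Gamma b / Gamma (a + b)) with (Bv a b).
  - exact (proj1 (Bv_is a b Ha Hb)).
  - rewrite <- E. field. split; lra.
Qed.
Lemma Gamma_poch s k : 0 < s -> Gamma (s + INR k) = poch s k * Gamma s.
Proof.
  intros Hs. induction k.
  - simpl. rewrite Rplus_0_r. ring.
  - rewrite S_INR. replace (s + (INR k + 1)) with ((s + INR k) + 1) by ring.
    rewrite Gamma_rec. rewrite IHk. simpl. ring.
    pose proof (pos_INR k); lra.
Qed.

Definition IFa := at_right 0.
Definition IFb := Rbar_locally p_infty.

Lemma int_sum (f : nat -> R -> R) (l : nat -> R) N :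
  (forall i, (i <= N)%nat -> is_RInt_gen (f i) (at_right 0) (Rbar_locally p_infty) (l i)) ->
  is_RInt_gen (fun x => sum_f_R0 (fun i => f i x) N) (at_right 0) (Rbar_locally p_infty) (sum_f_R0 l N).
Proof.
  induction N; intros H.
  - simpl. apply H. lia.
  - simpl. apply (is_RInt_gen_plus (fun x => sum_f_R0 (fun i => f i x) N) (f (S N))).
    apply IHN. intros; apply H; lia. apply H; lia.
Qed.

Lemma int_scal (f : R -> R) k l :
  is_RInt_gen f (at_right 0) (Rbar_locally p_infty) l ->
  is_RInt_gen (fun x => k * f x) (at_right 0) (Rbar_locally p_infty) (k * l).
Proof. intros H. apply (is_RInt_gen_scal f k l H). Qed.

Lemma term_int (p q : R) (k l : nat) : q > -1 -> p - 1 - INR k - INR l > 0 ->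
  is_RInt_gen (fun x => Rpower x q / Rpower (1 + x) (p + q) * (x ^ k * (1 + x) ^ l))
    (at_right 0) (Rbar_locally p_infty)
    (Gamma (q + 1 + INR k) * Gamma (p - 1 - INR k - INR l) / Gamma (p + q - INR l)).
Proof.
  intros Hq Hp.
  replace (p + q - INR l) with ((q + 1 + INR k) + (p - 1 - INR k - INR l)) by ring.
  eapply ext_pos; [| apply Beta_int].
  - intros x Hx.
    replace (q + 1 + INR k - 1) with (q + INR k) by ring.
    replace (- (q + 1 + INR k + (p - 1 - INR k - INR l))) with (- (p + q) + INR l) by ring.
    rewrite (Rpower_plus q (INR k) x), (Rpower_plus (-(p+q)) (INR l) (1+x)), Rpower_Ropp, !Rpower_pow by lra.
    unfold Rdiv. ring.
  - pose proof (pos_INR k); lra.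
  - lra.
Qed.

Lemma sum_mul_r (f : nat -> R) N c : sum_f_R0 f N * c = sum_f_R0 (fun i => f i * c) N.
Proof. induction N; simpl; [ring| rewrite <- IHN; ring]. Qed.

Definition Aj (u n : nat) (p q : R) (j : nat) : R := (-1) ^ n * poch (q + 1) (u * n) *
  ((-1) ^ j * binomR n j * poch (INR n + 1 - p) (u * j) / poch (q + 1) (u * j) * (-1) ^ (u * j)).
Definition Brs (u m : nat) (p q : R) (r s : nat) : R := (-1) ^ (s + m) * binomR r s * (poch (p + q - INR m) r / INR (fact r))
      * poch ((INR s + q + 1) / INR u) m.
Definition wt (p q x : R) := Rpower x q / Rpower (1 + x) (p + q).

Lemma integrand_expand u n m p q x :
  wt p q x * Mpoly n p q u x * frakM m p q u x =
  sum_f_R0 (fun j => sum_f_R0 (fun r => sum_f_R0 (fun s =>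
     Aj u n p q j * Brs u m p q r s * (wt p q x * (x ^ (u * j + r) * (1 + x) ^ (m - r)))) r) m) n.
Proof.
  unfold Mpoly, frakM.
  rewrite <- Rmult_assoc.
  rewrite (sum_scal_l _ n (wt p q x * ((-1) ^ n * poch (q + 1) (u * n)))).
  rewrite sum_mul_r. apply sum_ext. intros j Hj.
  rewrite sum_scal_l. apply sum_ext. intros r Hr.
  rewrite sum_scal_l. apply sum_ext. intros s Hs.
  unfold Aj, Brs.
  replace (- x) with (-1 * x) by ring. rewrite Rpow_mult_distr, (pow_add x (u * j) r).
  ring.
Qed.
Lemma key_bound u n m p k : p > (INR u + 1) * INR (Nat.max n m) + 1 ->
  (k <= (u + 1) * Nat.max n m)%nat -> INR k + 1 < p.
Proof.
  intros Hp Hk. apply le_INR in Hk. rewrite mult_INR, plus_INR in Hk. change (INR 1) with 1 in Hk. lra.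
Qed.

Lemma integral_value u n m p q : (0 < u)%nat ->
  p > (INR u + 1) * INR (Nat.max n m) + 1 -> q > -1 ->
  is_RInt_gen (fun x => Rpower x q / Rpower (1 + x) (p + q) * Mpoly n p q u x * frakM m p q u x)
    (at_right 0) (Rbar_locally p_infty)
    (sum_f_R0 (fun j => sum_f_R0 (fun r => sum_f_R0 (fun s =>
       Aj u n p q j * Brs u m p q r s *
       (Gamma (q + 1 + INR (u * j + r)) * Gamma (p - 1 - INR (u * j + r) - INR (m - r))
          / Gamma (p + q - INR (m - r)))) r) m) n).
Proof.
  intros Hu Hp Hq.
  eapply ext_pos. { intros x _. symmetry. exact (integrand_expand u n m p q x). }
  apply int_sum; intros j Hj. apply int_sum; intros r Hr. apply int_sum; intros s Hs.
  apply int_scal. apply term_int; [lra|].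
  assert (Hk : (u * j + m <= (u + 1) * Nat.max n m)%nat).
  { pose proof (Nat.le_max_l n m). pose proof (Nat.le_max_r n m).
    remember (Nat.max n m) as M. nia. }
  assert (H := key_bound u n m p (u * j + m) Hp Hk).
  rewrite plus_INR in H. rewrite plus_INR, minus_INR by lia. lra.
Qed.
Lemma pow_m1_cases k : (-1) ^ k = 1 \/ (-1) ^ k = -1.
Proof. induction k; simpl. auto. destruct IHk as [-> | ->]; [right|left]; ring. Qed.

Lemma sum_last (f : nat -> R) N : (forall j, (j < N)%nat -> f j = 0) -> sum_f_R0 f N = f N.
Proof.
  intros H. destruct N. reflexivity.
  rewrite tech5, sum_zero. ring. intros; apply H; lia.
Qed.

Lemma inner_rs u m p q j : (0 < u)%nat -> p + q - INR m > 0 -> q > -1 ->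
  p - 1 - INR m - INR (u * j) > 0 ->
  sum_f_R0 (fun r => sum_f_R0 (fun s => Brs u m p q r s *
       (Gamma (q + 1 + INR (u * j + r)) * Gamma (p - 1 - INR (u * j + r) - INR (m - r))
          / Gamma (p + q - INR (m - r)))) r) m
  = (-1) ^ m * Gamma (q + 1) * poch (q + 1) (u * j) * Gamma (p - 1 - INR m - INR (u * j))
      / Gamma (p + q - INR m) * poch (- INR j) m.
Proof.
  intros Hu Hpq Hq Hb.
  assert (Hu' : INR u <> 0) by (apply not_0_INR; lia).
  assert (Hc : 0 < q + 1 + INR (u * j)) by (pose proof (pos_INR (u * j)); lra).
  replace (poch (- INR j) m) with
    (poch ((q + 1) / INR u + / INR u * (- (q + 1 + INR (u * j)))) m).
  2:{ f_equal. rewrite mult_INR. field. auto. }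
  rewrite <- (T_identity m ((q + 1) / INR u) (/ INR u) (q + 1 + INR (u * j)) Hc).
  rewrite sum_scal_l. apply sum_ext. intros r Hr.
  rewrite sum_scal_l. apply sum_ext. intros s Hs.
  rewrite (Gamma_poch (q + 1) (u * j + r)) by lra.
  rewrite poch_add.
  replace (p + q - INR (m - r)) with ((p + q - INR m) + INR r) by (rewrite minus_INR by lia; ring).
  rewrite (Gamma_poch (p + q - INR m) r) by lra.
  replace (p - 1 - INR (u * j + r) - INR (m - r)) with (p - 1 - INR m - INR (u * j))
    by (rewrite plus_INR, minus_INR by lia; ring).
  unfold Brs.
  replace ((INR s + q + 1) / INR u) with ((q + 1) / INR u + / INR u * INR s) by (field; auto).
  rewrite pow_add.
  assert (0 < poch (p + q - INR m) r) by (apply poch_pos; lra).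
  assert (0 < Gamma (p + q - INR m)) by (apply Gamma_pos; lra).
  pose proof (INR_fact_neq_0 r).
  field. repeat split; auto; lra.
Qed.
Lemma value_eq u n m p q : (0 < u)%nat ->
  p > (INR u + 1) * INR (Nat.max n m) + 1 -> q > -1 ->
  sum_f_R0 (fun j => sum_f_R0 (fun r => sum_f_R0 (fun s =>
       Aj u n p q j * Brs u m p q r s *
       (Gamma (q + 1 + INR (u * j + r)) * Gamma (p - 1 - INR (u * j + r) - INR (m - r))
          / Gamma (p + q - INR (m - r)))) r) m) n
  = INR (fact n) * Gamma (p - INR n) * Gamma (q + 1 + INR u * INR n)
     / ((p - 1 - INR n - INR u * INR n) * Gamma (p + q - INR n))
     * kron_delta n m.
Proof.
  intros Hu Hp Hq.
  pose proof (Nat.le_max_l n m) as Hmaxl. pose proof (Nat.le_max_r n m) as Hmaxr.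
  assert (Hm1 : INR m + 1 < p).
  { apply (key_bound u n m p m Hp). remember (Nat.max n m) as M. nia. }
  assert (Hpq : p + q - INR m > 0) by lra.
  assert (Hbj : forall j, (j <= n)%nat -> p - 1 - INR m - INR (u * j) > 0).
  { intros j Hj. assert (H := key_bound u n m p (u * j + m) Hp ltac:(remember (Nat.max n m) as M; nia)).
    rewrite plus_INR in H. lra. }
  assert (Hbn : forall j, (j <= n)%nat -> p - INR n - INR (u * j) > 0).
  { intros j Hj. assert (H := key_bound u n m p (n + u * j) Hp ltac:(remember (Nat.max n m) as M; nia)).
    rewrite plus_INR in H. lra. }
  set (K := (-1) ^ n * poch (q + 1) (u * n) * Gamma (q + 1) * (-1) ^ m / Gamma (p + q - INR m)).
  transitivity (K * sum_f_R0 (fun j => (-1) ^ j * binomR n j *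
      (poch (p - INR n - INR (u * j)) (u * j) * Gamma (p - 1 - INR m - INR (u * j))) * poch (- INR j) m) n).
  { rewrite sum_scal_l. apply sum_ext. intros j Hj.
    transitivity (Aj u n p q j * sum_f_R0 (fun r => sum_f_R0 (fun s => Brs u m p q r s *
       (Gamma (q + 1 + INR (u * j + r)) * Gamma (p - 1 - INR (u * j + r) - INR (m - r))
          / Gamma (p + q - INR (m - r)))) r) m).
    { rewrite sum_scal_l. apply sum_ext. intros r Hr. rewrite sum_scal_l. apply sum_ext. intros s Hs. ring. }
    rewrite inner_rs by (auto; lra).
    unfold Aj, K.
    assert (Hneg : poch (INR n + 1 - p) (u * j) =
                   poch (p - INR n - INR (u * j)) (u * j) * (-1) ^ (u * j)).
    { replace (p - INR n - INR (u * j)) with (- (INR n + 1 - p) - INR (u * j) + 1) by ring.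
      rewrite <- poch_neg. rewrite Rmult_assoc, <- pow_add.
      replace (u * j + u * j)%nat with (2 * (u * j))%nat by lia. rewrite pow_1_even. ring. }
    rewrite Hneg.
    assert (0 < poch (q + 1) (u * j)) by (apply poch_pos; lra).
    assert (0 < Gamma (p + q - INR m)) by (apply Gamma_pos; lra).
    destruct (pow_m1_cases (u * j)) as [E|E]; rewrite E; field; split; lra. }
  unfold kron_delta.
  destruct (Compare_dec.lt_eq_lt_dec n m) as [[Hlt|Heq]|Hgt].
  -
    replace (Nat.eqb n m) with false by (symmetry; apply Nat.eqb_neq; lia).
    rewrite sum_zero. ring. intros j Hj. rewrite poch_zero_nat by lia. ring.
  - subst m. rewrite Nat.eqb_refl.
    rewrite sum_last.
    2:{ intros j Hj. rewrite poch_zero_nat by lia. ring. }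
    rewrite poch_neg_nat. unfold binomR. rewrite C_n_n.
    assert (Hb := Hbj n (le_n n)).
    replace (Gamma (p - INR n)) with
      ((p - 1 - INR n - INR (u * n)) * poch (p - INR n - INR (u * n)) (u * n) * Gamma (p - 1 - INR n - INR (u * n))).
    2:{ replace (p - INR n) with ((p - 1 - INR n - INR (u * n)) + INR (S (u * n))) at 2 by (rewrite S_INR; ring).
        rewrite Gamma_poch by lra. rewrite poch_S_l.
        replace (p - 1 - INR n - INR (u * n) + 1) with (p - INR n - INR (u * n)) by ring. ring. }
    replace (q + 1 + INR u * INR n) with ((q + 1) + INR (u * n)) by (rewrite mult_INR; ring).
    rewrite Gamma_poch by lra.
    unfold K. rewrite mult_INR.
    assert (0 < Gamma (p + q - INR n)) by (apply Gamma_pos; lra).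
    assert (0 < Gamma (p - 1 - INR n - INR u * INR n)) by (apply Gamma_pos; rewrite <- mult_INR; lra).
    rewrite mult_INR in Hb.
    destruct (pow_m1_cases n) as [E|E]; rewrite E; field; split; lra.
  - replace (Nat.eqb n m) with false by (symmetry; apply Nat.eqb_neq; lia).
    rewrite Rmult_0_r.
    transitivity (K * (Gamma (p - INR n) * sum_f_R0 (fun j => (-1) ^ j * bin n j *
       (fun x => 1 * poch (0 + -1 * x) m * poch ((p - INR n) + (- INR u) * x) (n - 1 - m)) (INR j)) n)).
    + f_equal. rewrite sum_scal_l. apply sum_ext. intros j Hj.
      rewrite binomR_bin by lia.
      replace (Gamma (p - 1 - INR m - INR (u * j))) with
        (poch (p - INR n - INR (u * j)) (n - 1 - m) * Gamma (p - INR n - INR (u * j))).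
      2:{ rewrite <- Gamma_poch by (apply Hbn; auto). f_equal. rewrite !minus_INR by lia. simpl INR. ring. }
      replace (Gamma (p - INR n)) with (poch (p - INR n - INR (u * j)) (u * j) * Gamma (p - INR n - INR (u * j))).
      2:{ rewrite <- Gamma_poch by (apply Hbn; auto). f_equal. ring. }
      replace (0 + -1 * INR j) with (- INR j) by ring.
      replace (p - INR n + - INR u * INR j) with (p - INR n - INR (u * j)) by (rewrite mult_INR; ring).
      ring.
    + pose proof (vanish n (0 + m + (n - 1 - m))
        (fun x => 1 * poch (0 + -1 * x) m * poch ((p - INR n) + (- INR u) * x) (n - 1 - m))
        ltac:(lia) ltac:(apply Pd_poch; apply Pd_poch; apply Pd_const)) as HV.
      cbv beta in HV |- *. rewrite HV. ring.
Qed.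

Theorem mainTheorem1 (u n m : nat) (p q : R) :
  (0 < u)%nat ->
  p > (INR u + 1) * INR (Nat.max n m) + 1 ->
  q > -1 ->
  is_RInt_gen
    (fun x => Rpower x q / Rpower (1 + x) (p + q)
              * Mpoly n p q u x * frakM m p q u x)
    (at_right 0) (Rbar_locally p_infty)
    (INR (fact n) * Gamma (p - INR n) * Gamma (q + 1 + INR u * INR n)
     / ((p - 1 - INR n - INR u * INR n) * Gamma (p + q - INR n))
     * kron_delta n m).
Proof.
  intros Hu Hp Hq.
  rewrite <- (value_eq u n m p q Hu Hp Hq).
  apply integral_value; auto.
Qed.
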